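(* Let $2\le k_1<\dots<k_m\le n$ ($m\ge1$), $1\le i_{k_j}\le k_j-1$, with $M:=\sum_{j=1}^m i_{k_j}\le k_1$. Let $\pi'=t_{k_1}^{i_{k_1}}\cdots t_{k_m}^{i_{k_m}}\in S_n$, $\pi^\circ$ the same word in $D_n$, and $\pi=w_L\cdot\pi^\circ$ with $1\le L\le n-1$. Then: (a) if $L<M$, $\ell(\pi)=2L+\ell(\pi')$; (b) if $L=M<k_1$, $\ell(\pi)=\ell(\pi')$; (c) if $M<L<k_1$, $\ell(\pi)=2(L-M)+\ell(\pi')$; (d) if $k_r\le L<k_{r+1}$ for some $1\le r\le m-1$, $\ell(\pi)=2\big(L-\sum_{j=r+1}^m i_{k_j}\big)+\ell(\pi')$; (e) if $L\ge k_m$, $\ell(\pi)=2L+\ell(\pi')$.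
   Context: $D_n$ ($n\ge2$) is the Coxeter group with generators $s_{1'},s_1,\dots,s_{n-1}$ and relations $s^2=1$, $(s_i s_{i+1})^3=1$, $(s_is_j)^2=1$ for $|i-j|\ge 2$, $(s_{1'}s_2)^3=1$, $(s_{1'}s_i)^2=1$ for $i\ne 2$; $S_n$ has Coxeter generators $s_i=(i,i+1)$. In both groups $t_k=s_1\cdots s_{k-1}$; in $D_n$, $w_L=s_L s_{L-1}\cdots s_2 s_1 s_{1'} s_2\cdots s_L$. $\ell(\pi)$ is Coxeter length in $D_n$ with respect to $\{s_{1'},s_1,\dots,s_{n-1}\}$, and $\ell(\pi')$ is Coxeter length in $S_n$. (The hypothesis $M\le k_1$ says $\pi'$ is a standard OGS elementary element with major index $M$.) *)

(* Defs.v *)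
From mathcomp Require Import all_boot all_fingroup.
Set Implicit Arguments. Unset Strict Implicit. Unset Printing Implicit Defensive.

Section WordLength.
Variables (G : finType) (gT : finGroupType) (gen : G -> gT).

Definition wordval (w : seq G) : gT := foldr (fun g acc => (gen g * acc)%g) 1%g w.

Definition haslen (x : gT) (k : nat) : bool :=
  [exists t : k.-tuple G, wordval t == x].

Lemma haslen_ex (w : seq G) : exists k, haslen (wordval w) k.
Proof. exists (size w); apply/existsP; exists (in_tuple w); by []. Qed.

Definition coxlen (w : seq G) : nat := ex_minn (haslen_ex w).
End WordLength.

(* S_n : generators s_1..s_{n-1}; j : 'I_n.-1 encodes s_{j+1} = (j+1, j+2)  *)
(* (i.e. swapping the 0-indexed points j and j+1 of 'I_n).                  *)
Definition genS (n : nat) := 'I_n.-1.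

Definition sS (n : nat) (j : genS n) : {perm 'I_n} :=
  match (insub (val j) : option 'I_n), (insub (val j).+1 : option 'I_n) with
  | Some a, Some b => tperm a b
  | _, _ => 1%g
  end.

(* D_n realised (faithfully, Bjorner-Brenti 8.2) as even signed permutations *)
(* of {1..n}, i.e. permutations of 'I_n * bool (bool = sign).                *)
(* None encodes s_{1'} = [-2,-1,3,...,n]; Some j encodes s_{j+1}.            *)
Definition genD (n : nat) := option 'I_n.-1.

Definition sD (n : nat) (g : genD n) : {perm 'I_n * bool} :=
  match g with
  | None =>
    match (insub 0 : option 'I_n), (insub 1 : option 'I_n) with
    | Some a, Some b => (tperm (a, false) (b, true) * tperm (a, true) (b, false))%g
    | _, _ => 1%g
    end
  | Some j =>
    match (insub (val j) : option 'I_n), (insub (val j).+1 : option 'I_n) with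
    | Some a, Some b => (tperm (a, false) (b, false) * tperm (a, true) (b, true))%g
    | _, _ => 1%g
    end
  end.

(* i : nat stands for s_i (1 <= i <= n-1); in D_n, None stands for s_{1'}.  *)
Definition letS (n : nat) (i : nat) : option (genS n) :=
  if 0 < i then insub i.-1 else None.

Definition letD (n : nat) (o : option nat) : option (genD n) :=
  match o with
  | None => Some None
  | Some i => omap Some (letS n i)
  end.

Definition lenS (n : nat) (w : seq nat) : nat := coxlen (@sS n) (pmap (letS n) w).
Definition lenD (n : nat) (w : seq (option nat)) : nat :=
  coxlen (@sD n) (pmap (letD n) w).

Definition t_word (k : nat) : seq nat := iota 1 k.-1.

Definition t_pow (k i : nat) : seq nat := flatten (nseq i (t_word k)).

Definition ogs_word (m : nat) (k i : nat -> nat) : seq nat :=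
  flatten [seq t_pow (k j) (i j) | j <- iota 1 m].

(* w_L = s_L s_{L-1} ... s_2 s_1 s_{1'} s_2 ... s_L *)
Definition wL_word (L : nat) : seq (option nat) :=
  [seq Some x | x <- rev (iota 1 L)] ++ None :: [seq Some x | x <- iota 2 L.-1].

(* Main.v *)
Require Import Defs.
From mathcomp Require Import all_boot all_order all_fingroup all_algebra zify.
Set Implicit Arguments. Unset Strict Implicit. Unset Printing Implicit Defensive.

Section Gen.
Variables (G : finType) (gT : finGroupType) (gen : G -> gT) (Inv : pred gT) (f : gT -> nat).
Hypotheses (genK : forall g, (gen g * gen g = 1)%g) (f1 : f 1%g = 0) (Inv1 : Inv 1%g)
  (InvM : forall g y, Inv y -> Inv (gen g * y)%g)
  (fM : forall g y, Inv y -> f (gen g * y)%g <= (f y).+1)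
  (fD : forall y, Inv y -> y != 1%g -> exists g, f (gen g * y)%g < f y).

Lemma Inv_word w : Inv (wordval gen w).
Proof. elim: w => [|g w IH] //=; exact: InvM. Qed.

Lemma f_word_le w : f (wordval gen w) <= size w.
Proof.
elim: w => [|g w IH] /=; first by rewrite f1.
apply: leq_trans (fM g (Inv_word w)) _; by rewrite ltnS.
Qed.

Lemma word_ex y : Inv y -> exists w, wordval gen w = y /\ size w <= f y.
Proof.
move: {2}(f y) (leqnn (f y)) => N; elim: N y => [|N IH] y Hy Iy.
  have y1 : y = 1%g.
    apply/eqP; apply/negPn/negP => ny.
    by have [g] := fD Iy ny; rewrite ltnNge (leq_trans Hy) //.
  by exists [::]; rewrite y1.
case: (eqVneq y 1%g) => [->|ny]; first by exists [::].
have [g Hg] := fD Iy ny.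
have [w [Hw Hs]] := IH (gen g * y)%g (leq_trans Hg Hy) (InvM g Iy).
exists (g :: w); split => /=.
  by rewrite Hw mulgA genK mul1g.
by apply: leq_trans Hg; rewrite ltnS.
Qed.

Theorem coxlenE w : coxlen gen w = f (wordval gen w).
Proof.
rewrite /coxlen; case: ex_minnP => m /existsP [t /eqP Ht] Hmin.
apply/eqP; rewrite eqn_leq; apply/andP; split.
  have [w' [Hw' Hs]] := word_ex (Inv_word w).
  apply: leq_trans (Hmin _ _) Hs.
  by apply/existsP; exists (in_tuple w'); rewrite /= Hw'.
by rewrite -Ht; apply: leq_trans (f_word_le _) _; rewrite size_tuple.
Qed.
End Gen.


Definition Phi (n : nat) (T : Type) (c : T -> T -> nat) (x : 'I_n -> T) : nat :=
  \sum_(p : 'I_n * 'I_n | p.1 < p.2) c (x p.1) (x p.2).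

Lemma tpermVal n (a0 b0 a : 'I_n) :
  val (tperm a0 b0 a) = if val a == val a0 then val b0 else if val a == val b0 then val a0 else val a.
Proof.
rewrite permE /=; case: (a =P a0) => [->|/eqP]; first by rewrite eqxx.
rewrite -val_eqE => /negbTE ->; case: (a =P b0) => [->|/eqP]; first by rewrite eqxx.
by rewrite -val_eqE => /negbTE ->.
Qed.

Lemma Phi_swap n T (c : T -> T -> nat) (x x' : 'I_n -> T) (a0 b0 : 'I_n)
  (Hab : val b0 = (val a0).+1)
  (H : forall p : 'I_n * 'I_n, p.1 < p.2 -> p != (a0, b0) ->
        c (x' p.1) (x' p.2) = c (x (tperm a0 b0 p.1)) (x (tperm a0 b0 p.2))) :
  Phi c x' + c (x a0) (x b0) = Phi c x + c (x' a0) (x' b0).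
Proof.
have lt0 : a0 < b0 by rewrite Hab.
rewrite /Phi (bigD1 (a0, b0)) //= [in RHS](bigD1 (a0, b0)) //=.
suff -> : \sum_(i : 'I_n * 'I_n | (i.1 < i.2) && (i != (a0, b0))) c (x' i.1) (x' i.2) =
  \sum_(i : 'I_n * 'I_n | (i.1 < i.2) && (i != (a0, b0))) c (x i.1) (x i.2).
  by rewrite addnAC [RHS]addnAC; congr (_ + _); rewrite addnC.
rewrite (eq_bigr (fun p => c (x (tperm a0 b0 p.1)) (x (tperm a0 b0 p.2)))); last first.
  by move=> p /andP [H1 H2]; rewrite H.
pose h (p : 'I_n * 'I_n) := (tperm a0 b0 p.1, tperm a0 b0 p.2).
have hinj : injective h.
  by move=> [p1 p2] [q1 q2] [/perm_inj -> /perm_inj ->].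
rewrite [RHS](reindex_inj hinj) /=.
apply: eq_bigl => -[p1 p2] /=.
rewrite /h /= !xpair_eqE.
have E : forall u v : 'I_n, (u == v) = (val u == val v) by [].
rewrite !E !tpermVal Hab.
have -> : (p1 < p2) = (val p1 < val p2) by [].
move: (val p1) (val p2) (val a0) => u v A.
by repeat case: ifP; move=> *; apply/idP/idP; lia.
Qed.


Lemma incr_id n (f : 'I_n -> nat) :
  (forall a b : 'I_n, nat_of_ord b = (nat_of_ord a).+1 -> f a < f b) -> (forall a, f a < n) ->
  forall a, f a = a.
Proof.
move=> Hinc Hlt.
have lo : forall t (a : 'I_n), nat_of_ord a = t -> t <= f a.
  elim=> [//|t IH] a Ha.
  have ltn' : t < n by move: (ltn_ord a); rewrite Ha; lia.
  have := IH (Ordinal ltn') erefl; have := Hinc (Ordinal ltn') a Ha; simpl; lia.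
have hi : forall d (a : 'I_n), a + d < n -> f a + d < n.
  elim=> [|d IH] a Ha; first by rewrite addn0.
  have lt' : a.+1 < n by lia.
  have h3 : (Ordinal lt') + d < n by rewrite /=; lia.
  have := IH _ h3; have := Hinc a (Ordinal lt') erefl; rewrite /=; lia.
move=> a; have := lo _ a erefl; have := hi (n - a.+1) a ltac:(move: (ltn_ord a); lia).
move: (ltn_ord a); lia.
Qed.

Lemma sS_tperm n (j : 'I_n.-1) :
  exists a0 b0 : 'I_n, [/\ nat_of_ord a0 = nat_of_ord j, nat_of_ord b0 = (nat_of_ord j).+1 & sS j = tperm a0 b0].
Proof.
have h1 : nat_of_ord j < n by move: (ltn_ord j); lia.
have h2 : (nat_of_ord j).+1 < n by move: (ltn_ord j); lia.
rewrite /sS; case: insubP => [a0 _ Ha0|]; last by rewrite h1.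
case: insubP => [b0 _ Hb0|]; last by rewrite h2.
by exists a0, b0; split.
Qed.

Definition cS (u v : nat) : nat := (v < u).
Definition fS n (y : {perm 'I_n}) : nat := Phi cS (fun a => nat_of_ord (y a)).

Lemma fS_swap n (y : {perm 'I_n}) (a0 b0 : 'I_n) : nat_of_ord b0 = (nat_of_ord a0).+1 ->
  fS (tperm a0 b0 * y) + cS (y a0) (y b0) = fS y + cS (y b0) (y a0).
Proof.
move=> Hab; rewrite /fS.
have := @Phi_swap n nat cS (fun a => nat_of_ord (y a)) (fun a => nat_of_ord ((tperm a0 b0 * y)%g a)) a0 b0 Hab.
rewrite !permM tpermL tpermR; apply => p _ _; by rewrite !permM.
Qed.

Lemma lenS_fS n (w : seq 'I_n.-1) : coxlen (@sS n) w = fS (wordval (@sS n) w).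
Proof.
apply: (@coxlenE _ _ _ predT) => //.
- by move=> g; have [a0 [b0 [_ _ ->]]] := sS_tperm g; rewrite tperm2.
- rewrite /fS /Phi; apply: big1 => p H; by rewrite !perm1 /cS ltnNge (ltnW H).
- move=> g y _; have [a0 [b0 [H1 H2 ->]]] := sS_tperm g.
  have := fS_swap y (a0 := a0) (b0 := b0) ltac:(by rewrite H1 H2).
  rewrite /cS; case: (_ < _); case: (_ < _); rewrite /=; move: (fS _) (fS y) => A B; lia.
- move=> y _ ny.
  case: (boolP [exists g, fS (sS g * y) < fS y]) => [/existsP [g Hg]|H]; first by exists g.
  exfalso; move/negP: ny; apply; apply/eqP/permP => a; rewrite perm1; apply: val_inj.
  move: a; apply: (incr_id (f := fun a => nat_of_ord (y a))) => // a1 b1 Hab /=.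
  have lt1 : nat_of_ord a1 < n.-1 by move: (ltn_ord b1); lia.
  have [a0 [b0 [H1 H2 E]]] := sS_tperm (Ordinal lt1).
  have ea : a0 = a1 by apply/eqP; rewrite -val_eqE /= H1.
  have eb : b0 = b1 by apply/eqP; rewrite -val_eqE /= H2 Hab.
  move: H; rewrite negb_exists => /forallP /(_ (Ordinal lt1)).
  rewrite E ea eb -leqNgt => Hle.
  have := fS_swap y Hab.
  have : nat_of_ord (y a1) != nat_of_ord (y b1).
    by rewrite val_eqE (inj_eq perm_inj) -val_eqE /= Hab; lia.
  move: Hle; rewrite /cS; set A := fS (tperm a1 b1 * y); set B := fS y.
  move: A B (nat_of_ord (y a1)) (nat_of_ord (y b1)) => A B u v.
  by case: ltngtP => h /=; rewrite ?eqxx; lia.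
Qed.

Import GRing.Theory Num.Theory Order.TTheory.


Definition flip n (q : 'I_n * bool) : 'I_n * bool := (q.1, ~~ q.2).
Definition sv n (q : 'I_n * bool) : int :=
  if q.2 then (- Posz q.1.+1)%R else Posz q.1.+1.
Definition cD (u v : int) : nat := addn (v < u)%R (v < - u)%R.

Lemma cD_swap (u v : int) : u != v -> u != (- v)%R ->
  addn (cD v u) (v < u)%R = addn (cD u v) (u < v)%R.
Proof. move=> H1 H2; rewrite /cD; case: (ltrgtP u v); case: (ltrgtP u (-v)); case: (ltrgtP v (-u)); move=> /= *; lia. Qed.

Lemma cD_swapN (u v : int) : u != v -> u != (- v)%R ->
  addn (cD (- v) (- u)) (v < - u)%R = addn (cD u v) (- u < v)%R.
Proof. move=> H1 H2; rewrite /cD; case: (ltrgtP u v); case: (ltrgtP u (-v)); case: (ltrgtP v (-u)); case: (ltrgtP (-v) (-u)); case: (ltrgtP (- - u) (-v)); move=> /= *; lia. Qed.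

Lemma cDN (u v : int) : cD (- u) v = cD u v.
Proof. by rewrite /cD opprK addnC. Qed.

Lemma sv_flip n (q : 'I_n * bool) : sv (flip q) = (- sv q)%R.
Proof. by case: q => a [] /=; rewrite /sv /= ?opprK. Qed.

Lemma sv_inj n : injective (@sv n).
Proof.
move=> [a s] [b t]; rewrite /sv /=; case: s; case: t => /= E; try lia;
  congr pair; apply/eqP; rewrite -val_eqE /=; apply/eqP; lia.
Qed.

Lemma sv_neq0 n (q : 'I_n * bool) : sv q != 0%R.
Proof. rewrite /sv; case: q.2; lia. Qed.

Lemma sD_some n (j : 'I_n.-1) :
  exists a0 b0 : 'I_n, [/\ nat_of_ord a0 = j, nat_of_ord b0 = j.+1 &
    forall q, sD (Some j) q = (tperm a0 b0 q.1, q.2)].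
Proof.
have h1 : nat_of_ord j < n by move: (ltn_ord j); lia.
have h2 : (nat_of_ord j).+1 < n by move: (ltn_ord j); lia.
rewrite /sD; case: insubP => [a0 _ Ha0|]; last by rewrite h1.
case: insubP => [b0 _ Hb0|]; last by rewrite h2.
exists a0, b0; split => // -[a s]; rewrite permM.
have ne : a0 != b0 by rewrite -val_eqE Ha0 Hb0; lia.
rewrite !permE /= !xpair_eqE /=.
have ne' := negbTE ne; have ne'' : (b0 == a0) = false by rewrite eq_sym.
case: s; (case: (a =P a0) => [->|/eqP/negbTE na]; [|case: (a =P b0) => [->|/eqP/negbTE nb]]);
  rewrite /= ?xpair_eqE ?eqxx ?ne' ?ne'' ?na ?nb //=.
all: by case: ifP => // /eqP. Qed.

Lemma sD_none n (Hn : 1 < n) :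
  exists a0 b0 : 'I_n, [/\ nat_of_ord a0 = 0, nat_of_ord b0 = 1 &
    forall q, sD None q = if q.1 == a0 then (b0, ~~ q.2) else if q.1 == b0 then (a0, ~~ q.2) else q].
Proof.
have h1 : 0 < n by lia.
rewrite /sD; case: insubP => [a0 _ Ha0|]; last by rewrite h1.
case: insubP => [b0 _ Hb0|]; last by rewrite Hn.
exists a0, b0; split => // -[a s]; rewrite permM.
have ne : a0 != b0 by rewrite -val_eqE Ha0 Hb0.
rewrite !permE /= !xpair_eqE /=.
have ne' := negbTE ne; have ne'' : (b0 == a0) = false by rewrite eq_sym.
case: s; (case: (a =P a0) => [->|/eqP/negbTE na]; [|case: (a =P b0) => [->|/eqP/negbTE nb]]);
  rewrite /= ?xpair_eqE ?eqxx ?ne' ?ne'' ?na ?nb //=.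
all: by case: ifP => // /eqP. Qed.

Section DS.
Variables (n : nat) (Hn : 1 < n).

Definition InvD (y : {perm 'I_n * bool}) : bool :=
  [forall q : 'I_n * bool, y (flip q) == flip (y q)] && ~~ odd (\sum_(a : 'I_n) (y (a, false)).2).
Definition xD (y : {perm 'I_n * bool}) (a : 'I_n) : int := sv (y (a, false)).
Definition fD (y : {perm 'I_n * bool}) : nat := Phi cD (xD y).

Lemma flip_gen (g : option 'I_n.-1) (q : 'I_n * bool) : sD g (flip q) = flip (sD g q).
Proof.
case: g => [j|].
  by have [a0 [b0 [_ _ E]]] := sD_some j; rewrite !E.
have [a0 [b0 [_ _ E]]] := sD_none Hn; rewrite !E /flip /=.
by case: ifP => //; case: ifP.
Qed.

Lemma InvD_sign (y : {perm 'I_n * bool}) : InvD y -> forall q, y (flip q) = flip (y q).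
Proof. by case/andP => /forallP H _ q; apply/eqP. Qed.

Lemma xD_dist (y : {perm 'I_n * bool}) (a b : 'I_n) : InvD y -> a != b -> (xD y a != xD y b) && (xD y a != - xD y b)%R.
Proof.
move=> Iy nab; apply/andP; split; apply/negP => /eqP E.
  by move/sv_inj/perm_inj: E => [] /eqP; rewrite (negbTE nab).
have : sv (y (a, false)) = sv (y (flip (b, false))) by rewrite InvD_sign // sv_flip.
by move/sv_inj/perm_inj.
Qed.

Lemma InvD1 : InvD 1.
Proof.
apply/andP; split; first by apply/forallP => q; rewrite !perm1.
by rewrite big1 // => a _; rewrite perm1.
Qed.

Lemma InvDM (g : option 'I_n.-1) (y : {perm 'I_n * bool}) : InvD y -> InvD (sD g * y).
Proof.
move=> Iy; apply/andP; split.
  by apply/forallP => q; rewrite !permM flip_gen InvD_sign.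
case: g => [j|].
  have [a0 [b0 [_ _ E]]] := sD_some j.
  under eq_bigr => a _ do rewrite permM E /=.
  have -> : (\sum_(a : 'I_n) (y (tperm a0 b0 a, false)).2 = \sum_(a : 'I_n) (y (a, false)).2)%N.
    by rewrite [in RHS](reindex_inj (@perm_inj _ (tperm a0 b0))).
  by case/andP: Iy.
have [a0 [b0 [H0 H1 E]]] := sD_none Hn.
have ne : a0 != b0 by rewrite -val_eqE /= H0 H1.
under eq_bigr => a _ do rewrite permM E /=.
have sg := InvD_sign Iy.
case/andP: Iy => _ Hodd.
have Hb : b0 != a0 by rewrite eq_sym.
rewrite (bigD1 a0) // (bigD1 b0) //= eqxx (negbTE Hb) eqxx.
move: Hodd; rewrite (bigD1 a0) // (bigD1 b0) //=.
under [X in _ -> ~~ odd (_ + (_ + X))]eq_bigr => i /andP [Ha Hb'] do rewrite (negbTE Ha) (negbTE Hb').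
have -> : (b0, true) = flip (b0, false) by [].
have -> : (a0, true) = flip (a0, false) by [].
rewrite !sg /= !oddD.
by case: (y (a0, false)).2; case: (y (b0, false)).2; rewrite /=; case: odd.
Qed.

Lemma fD_some (j : 'I_n.-1) (y : {perm 'I_n * bool}) :
  exists a0 b0 : 'I_n, [/\ nat_of_ord a0 = j, nat_of_ord b0 = j.+1 &
    addn (fD (sD (Some j) * y)) (cD (xD y a0) (xD y b0)) = addn (fD y) (cD (xD y b0) (xD y a0))].
Proof.
have [a0 [b0 [H0 H1 E]]] := sD_some j.
exists a0, b0; split => //.
have Hab : nat_of_ord b0 = (nat_of_ord a0).+1 by rewrite H0 H1.
have := @Phi_swap n int cD (xD y) (xD (sD (Some j) * y)) a0 b0 Hab.
rewrite /xD !permM !E /= tpermL tpermR; apply => p _ _.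
by rewrite !permM !E.
Qed.

Lemma fD_none (y : {perm 'I_n * bool}) : InvD y ->
  exists a0 b0 : 'I_n, [/\ nat_of_ord a0 = 0, nat_of_ord b0 = 1 &
    addn (fD (@sD n None * y)) (cD (xD y a0) (xD y b0)) = addn (fD y) (cD (- xD y b0) (- xD y a0))%R].
Proof.
move=> Iy; have sg := InvD_sign Iy.
have [a0 [b0 [H0 H1 E]]] := sD_none Hn.
exists a0, b0; split => //.
have Hab : nat_of_ord b0 = (nat_of_ord a0).+1 by rewrite H0 H1.
have ne : a0 != b0 by rewrite -val_eqE /= H0 H1.
have xa : xD (@sD n None * y) a0 = (- xD y b0)%R.
  by rewrite /xD permM E /= eqxx -sv_flip -sg.
have xb : xD (@sD n None * y) b0 = (- xD y a0)%R.
  by rewrite /xD permM E /= eq_sym (negbTE ne) eqxx -sv_flip -sg.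
have := @Phi_swap n int cD (xD y) (xD (@sD n None * y)) a0 b0 Hab.
rewrite xa xb; apply => -[p1 p2] /= lt12 nP.
have p2a : p2 != a0 by rewrite -val_eqE /= H0; lia.
have p2b : p2 != b0.
  apply/negP => /eqP E2; move: nP; rewrite E2 xpair_eqE eqxx andbT => /negP; apply.
  by rewrite -val_eqE /= H0; move: lt12; rewrite E2 H1; lia.
have -> : xD (@sD n None * y) p2 = xD y (tperm a0 b0 p2).
  by rewrite /xD permM E /= (negbTE p2a) (negbTE p2b) tpermD // eq_sym.
case: (p1 =P a0) => [->|/eqP p1a]; first by rewrite xa tpermL cDN.
case: (p1 =P b0) => [->|/eqP p1b]; first by rewrite xb tpermR cDN.
by rewrite /xD permM E /= (negbTE p1a) (negbTE p1b) (tpermD (x:=a0) (y:=b0) (z:=p1)) // ?(eq_sym a0) ?(eq_sym b0).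
Qed.


Lemma sDK (g : option 'I_n.-1) : (sD g * sD g = 1)%g.
Proof.
apply/permP => q; rewrite permM perm1.
case: g => [j|].
  by have [a0 [b0 [_ _ E]]] := sD_some j; rewrite !E /= tpermK; case: q.
have [a0 [b0 [H0 H1 E]]] := sD_none Hn.
have ne : a0 != b0 by rewrite -val_eqE /= H0 H1.
case: q => a s; rewrite !E /=.
case: (a =P a0) => [->|/eqP na]; first by rewrite eqxx /= eq_sym (negbTE ne) negbK.
case: (a =P b0) => [->|/eqP nb]; first by rewrite eqxx /= negbK.
by rewrite (negbTE na) (negbTE nb) /= ?(negbTE na) ?(negbTE nb).
Qed.

Lemma fD1 : fD 1 = 0.
Proof.
rewrite /fD /Phi big1 // => -[a b] /= H; rewrite /xD !perm1 /cD /sv /=.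
by rewrite addn0 ltNge lez_nat; move: H; case: leqP => //= ?; lia.
Qed.

Lemma fDM (g : option 'I_n.-1) y : InvD y -> fD (sD g * y) <= (fD y).+1.
Proof.
move=> Iy; case: g => [j|].
  have [a0 [b0 [H0 H1 E]]] := fD_some j y.
  have ne : a0 != b0 by rewrite -val_eqE /= H0 H1; lia.
  have /andP [d1 d2] := xD_dist Iy ne.
  have := cD_swap d1 d2; move: E.
  move: (fD (sD (Some j) * y)) (fD y) (cD (xD y a0) (xD y b0)) (cD (xD y b0) (xD y a0)) => A B C D.
  by case: (_ < _)%R; case: (_ < _)%R => /=; lia.
have [a0 [b0 [H0 H1 E]]] := fD_none Iy.
have ne : a0 != b0 by rewrite -val_eqE /= H0 H1.
have /andP [d1 d2] := xD_dist Iy ne.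
have := cD_swapN d1 d2; move: E.
move: (fD (@sD n None * y)) (fD y) (cD (xD y a0) (xD y b0)) (cD (- xD y b0) (- xD y a0))%R => A B C D.
by case: (_ < _)%R; case: (_ < _)%R => /=; lia.
Qed.


Lemma sv_pos (q : 'I_n * bool) : (0 < sv q)%R = ~~ q.2.
Proof. by case: q => a [] /=; rewrite /sv /=; lia. Qed.

Lemma fDD y : InvD y -> y != 1%g -> exists g, fD (sD g * y) < fD y.
Proof.
move=> Iy ny.
case: (boolP [exists g, fD (sD g * y) < fD y]) => [/existsP [g Hg]|H]; first by exists g.
exfalso; move/negP: ny; apply; apply/eqP.
have H' : forall g, fD y <= fD (sD g * y).
  by move=> g; move: H; rewrite negb_exists => /forallP /(_ g); rewrite -leqNgt.
have inc : forall a b : 'I_n, nat_of_ord b = (nat_of_ord a).+1 -> (xD y a < xD y b)%R.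
  move=> a b Hab.
  have lt1 : nat_of_ord a < n.-1 by move: (ltn_ord b); lia.
  have [a0 [b0 [H0 H1 E]]] := fD_some (Ordinal lt1) y.
  have ea : a0 = a by apply/eqP; rewrite -val_eqE /= H0.
  have eb : b0 = b by apply/eqP; rewrite -val_eqE /= H1 Hab.
  subst a0 b0.
  have ne : a != b by rewrite -val_eqE /= Hab; lia.
  have /andP [d1 d2] := xD_dist Iy ne.
  have := cD_swap d1 d2; have := H' (Some (Ordinal lt1)); move: E.
  move: (fD (sD (Some (Ordinal lt1)) * y)) (fD y) (cD (xD y a) (xD y b)) (cD (xD y b) (xD y a)) => A B C D.
  move: d1; case: (ltrgtP (xD y a) (xD y b)) => //= *; lia.
have [a0 [b0 [H0 H1 E]]] := fD_none Iy.
have ne : a0 != b0 by rewrite -val_eqE /= H0 H1.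
have nn : (- xD y a0 < xD y b0)%R.
  have /andP [d1 d2] := xD_dist Iy ne.
  have := cD_swapN d1 d2; have := H' None; move: E.
  move: (fD (@sD n None * y)) (fD y) (cD (xD y a0) (xD y b0)) (cD (- xD y b0) (- xD y a0))%R => A B C D.
  have d3 : (- xD y a0 != xD y b0)%R by move: d2; apply: contra => /eqP <-; rewrite opprK.
  move: d3; case: (ltrgtP (- xD y a0) (xD y b0))%R => //= *; lia.
have pos : forall t (a : 'I_n), nat_of_ord a = t.+1 -> (0 < xD y a)%R.
  elim=> [|t IH] a Ha.
    have eb : a = b0 by apply/eqP; rewrite -val_eqE /= H1 Ha.
    subst a; have := inc a0 b0 ltac:(by rewrite H0 H1); move: nn; lia.
  have lt' : t.+1 < n by move: (ltn_ord a); rewrite Ha; lia.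
  have := IH (Ordinal lt') erefl; have := inc (Ordinal lt') a Ha; lia.
have sg0 : forall a : 'I_n, a != a0 -> (y (a, false)).2 = false.
  move=> a na; apply/negbTE; rewrite -sv_pos.
  have : nat_of_ord a != 0 by move: na; rewrite -val_eqE /= H0.
  case Ht: (nat_of_ord a) => [|t] // _; exact: (pos t a Ht).
have sga : (y (a0, false)).2 = false.
  case/andP: (Iy) => _; rewrite (bigD1 a0) //= big1; last by move=> a /sg0 ->.
  by rewrite addn0; case: (y (a0, false)).2.
have sgall : forall a : 'I_n, (y (a, false)).2 = false.
  by move=> a; case: (a =P a0) => [->//|/eqP]; apply: sg0.
have id1 : forall a : 'I_n, nat_of_ord (y (a, false)).1 = a.
  apply: (incr_id (f := fun a => nat_of_ord (y (a, false)).1)) => // a b Hab /=.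
  have := inc a b Hab; rewrite /xD /sv /= !sgall; lia.
have ya : forall a : 'I_n, y (a, false) = (a, false).
  move=> a; move: (id1 a) (sgall a); case: (y (a, false)) => c s /= Hc ->.
  by congr pair; apply/eqP; rewrite -val_eqE /= Hc.
apply/permP => -[a s]; rewrite perm1; case: s; last exact: ya.
by have := InvD_sign Iy (a, false); rewrite /flip /= ya.
Qed.

Lemma lenD_fD (w : seq (option 'I_n.-1)) : coxlen (@sD n) w = fD (wordval (@sD n) w).
Proof.
apply: (@coxlenE _ _ _ InvD) => //.
- exact: sDK.
- exact: fD1.
- exact: InvD1.
- by move=> g y; apply: InvDM.
- by move=> g y; apply: fDM.
- exact: fDD.
Qed.

End DS.


Definition swapN (t x : nat) : nat := if t == x.-1 then x else if t == x then x.-1 else t.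
Definition swapD (q : nat * bool) (o : option nat) : nat * bool :=
  match o with
  | Some x => (swapN q.1 x, q.2)
  | None => if q.1 == 0 then (1, ~~ q.2) else if q.1 == 1 then (0, ~~ q.2) else q
  end.
Definition rho (k i t : nat) : nat := if t < k then (if i <= t then t - i else t + k - i) else t.

Lemma foldl_tword k t : foldl swapN t (t_word k) = rho k 1 t.
Proof.
rewrite /t_word; case: k => [|k] /=; first by rewrite /rho.
elim: k t => [|k IH] t; first by rewrite /rho /=; case: t.
have -> : iota 1 k.+1 = iota 1 k ++ [:: k.+1] by rewrite -[in LHS](addn1 k) iotaD add1n.
rewrite foldl_cat IH /= /swapN /rho.
by repeat case: ifP; move=> *; lia.
Qed.

Lemma foldl_tpow k i t : i < k -> foldl swapN t (t_pow k i) = rho k i t.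
Proof.
elim: i t => [|i IH] t Hi; first by rewrite /t_pow /= /rho; case: ifP => //; rewrite subn0.
rewrite /t_pow /= foldl_cat -/(t_pow k i) IH; last by lia.
rewrite foldl_tword /rho.
by repeat case: ifP; move=> *; lia.
Qed.

Fixpoint Gm (k i : nat -> nat) (j t : nat) : nat :=
  if j is j'.+1 then rho (k j) (i j) (Gm k i j' t) else t.

Lemma foldl_ogs (k i : nat -> nat) j t : (forall l, 1 <= l <= j -> i l < k l) ->
  foldl swapN t (ogs_word j k i) = Gm k i j t.
Proof.
elim: j t => [|j IH] t H //=.
have -> : ogs_word j.+1 k i = ogs_word j k i ++ t_pow (k j.+1) (i j.+1).
  rewrite /ogs_word -[in LHS](addn1 j) iotaD map_cat flatten_cat /= cats0 add1n //.
rewrite foldl_cat IH; last by move=> l Hl; apply: H; lia.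
by rewrite foldl_tpow //; apply: H; lia.
Qed.

Lemma foldl_mapSome u q : foldl swapD q (map Some u) = (foldl swapN q.1 u, q.2).
Proof. by elim: u q => [|x u IH] [a s] //=; rewrite IH. Qed.

Lemma foldl_wL L a s : 1 <= L ->
  foldl swapD (a, s) (wL_word L) = (a, s (+) ((a == 0) || (a == L))).
Proof.
elim: L a s => [//|L IH] a s _.
case: L IH => [|L] IH.
  rewrite /wL_word /= /swapN /=.
  by case: a => [|[|a]] //=; rewrite ?addbT ?addbF.
have -> : wL_word L.+2 = Some L.+2 :: wL_word L.+1 ++ [:: Some L.+2].
  rewrite /wL_word.
  have -> : iota 1 L.+2 = iota 1 L.+1 ++ [:: L.+2] by rewrite -[in LHS](addn1 L.+1) iotaD add1n.
  have -> : iota 2 L.+1 = iota 2 L ++ [:: L.+2] by rewrite -[in LHS](addn1 L) iotaD.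
  by rewrite rev_cat /= map_cat -catA.
rewrite /= foldl_cat /= IH // /swapN /=.
have e1 : (L.+2 == L.+1) = false by apply/negbTE/eqP; lia.
have e2 : (L.+1 == L.+2) = false by apply/negbTE/eqP; lia.
case: (a =P L.+1) => [->|/eqP/negbTE na]; [| case: (a =P L.+2) => [->|/eqP/negbTE nb]];
  rewrite /= ?eqxx ?na ?nb ?e1 ?e2 /= ?addbT ?addbF ?negbK //.
Qed.


Section Form.
Variables (m : nat) (k i : nat -> nat).
Hypotheses (Hk1 : 2 <= k 1) (Hinc : forall j, 1 <= j < m -> k j < k j.+1)
  (Hi : forall j, 1 <= j <= m -> 1 <= i j <= (k j).-1).
Definition Ssum j := \sum_(1 <= l < j.+1) i l.
Hypothesis (HM : Ssum m <= k 1).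

Lemma S0 : Ssum 0 = 0.
Proof. by rewrite /Ssum big_geq. Qed.

Lemma SS j : Ssum j.+1 = Ssum j + i j.+1.
Proof. by rewrite /Ssum big_nat_recr. Qed.

Lemma S_mono j j' : j <= j' -> Ssum j <= Ssum j'.
Proof.
elim: j' => [|j' IH]; first by rewrite leqn0 => /eqP ->.
rewrite leq_eqVlt => /orP [/eqP -> //|]; rewrite ltnS => /IH; rewrite SS; lia.
Qed.

Lemma k_mono a b : 1 <= a -> a <= b -> b <= m -> k a <= k b.
Proof.
move=> Ha; elim: b => [|b IH]; first lia.
rewrite leq_eqVlt => /orP [/eqP -> //|]; rewrite ltnS => Hab Hb.
have := IH Hab ltac:(lia); have := Hinc (j := b) ltac:(lia); lia.
Qed.

Lemma k_strict a b : 1 <= a -> a < b -> b <= m -> k a < k b.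
Proof.
move=> Ha Hab Hb; have := k_mono (a := a.+1) (b := b) ltac:(lia) Hab Hb.
have := Hinc (j := a) ltac:(lia); lia.
Qed.

Lemma Gm_formula j : j <= m ->
  (forall l t, 1 <= l <= j -> Ssum l.-1 <= t < Ssum l -> Gm k i j t = t + k l - Ssum j) /\
  (forall c t, c <= j -> Ssum j <= t -> (1 <= c -> k c <= t) -> (c < j -> t < k c.+1) ->
     Gm k i j t = t - Ssum j + Ssum c).
Proof.
elim: j => [_|j IH Hj].
  split; first lia.
  move=> c t Hc _ _ _; have -> : c = 0 by lia.
  by rewrite /= S0 !subn0 addn0.
have [IH1 IH2] := IH ltac:(lia).
have SM : Ssum j.+1 <= Ssum m by apply: S_mono.
have Hij := Hi (j := j.+1) ltac:(lia).
have SSj := SS j.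
split.
- move=> l t Hl Ht.
  case: (ltnP l j.+1) => Hlj.
    have E := IH1 l t ltac:(lia) Ht.
    have Hkl : k 1 <= k l by apply: k_mono; lia.
    have Hkl2 : k l < k j.+1 by apply: k_strict; lia.
    have := S_mono (j := l) (j' := j) ltac:(lia).
    rewrite /= E /rho; repeat case: ifP; move=> *; lia.
  have El : l = j.+1 by lia.
  subst l; rewrite /= in Ht.
  have E := IH2 0 t ltac:(lia) ltac:(lia) ltac:(lia) ltac:(move=> _; lia).
  have Hk : k 1 <= k j.+1 by apply: k_mono; lia.
  rewrite /= E /rho S0; repeat case: ifP; move=> *; lia.
- move=> c t Hc Ht Hc1 Hc2.
  case: (ltnP c j.+1) => Hcj.
    have E := IH2 c t ltac:(lia) ltac:(lia) Hc1 ltac:(move=> ?; apply: Hc2; lia).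
    have := Hc2 Hcj.
    have Hkc : k c.+1 <= k j.+1 by apply: k_mono; lia.
    have := S_mono (j := c) (j' := j) ltac:(lia).
    rewrite /= E /rho; repeat case: ifP; move=> *; lia.
  have Ec : c = j.+1 by lia.
  subst c.
  have Hkt := Hc1 isT.
  have E := IH2 j t ltac:(lia) ltac:(lia) ltac:(move=> ?; have := k_strict (a := j) (b := j.+1); lia) ltac:(lia).
  rewrite /= E /rho; repeat case: ifP; move=> *; lia.
Qed.

Lemma block_ex j t : t < Ssum j -> exists l, 1 <= l <= j /\ Ssum l.-1 <= t < Ssum l.
Proof.
elim: j => [|j IH]; first by rewrite S0.
case: (ltnP t (Ssum j)) => h.
  by move=> _; have [l [H1 H2]] := IH h; exists l; split => //; lia.
by move=> h2; exists j.+1; split => //=; lia.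
Qed.

Lemma cidx_ex t j : j <= m -> exists c, c <= j /\ (1 <= c -> k c <= t) /\ (c < j -> t < k c.+1).
Proof.
elim: j => [|j IH] Hj; first by exists 0.
have [c [H1 [H2 H3]]] := IH ltac:(lia).
case: (ltnP c j) => hc.
  by exists c; split; [lia|split => // _; apply: H3].
case: (ltnP t (k j.+1)) => ht.
  by exists c; split; [lia|split => // _; have -> : c = j by lia].
exists j.+1; split => //; split => // *; lia.
Qed.

Hypothesis Hm : 1 <= m.
Notation G := (Gm k i m).
Notation M := (Ssum m).

Lemma Glow a : a < M -> exists l, [/\ 1 <= l <= m, Ssum l.-1 <= a < Ssum l & G a = a + k l - M].
Proof.
move=> Ha; have [l [H1 H2]] := block_ex Ha.
by exists l; split => //; have [F1 _] := Gm_formula (leqnn m); apply: F1.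
Qed.

Lemma Ghigh a : M <= a -> exists c, [/\ c <= m, 1 <= c -> k c <= a, c < m -> a < k c.+1 & G a = a - M + Ssum c].
Proof.
move=> Ha; have [c [H1 [H2 H3]]] := cidx_ex a (leqnn m).
by exists c; split => //; have [_ F2] := Gm_formula (leqnn m); apply: F2.
Qed.

Lemma sum_ones lo hi (f : nat -> bool) : (forall a, lo <= a < hi -> f a) ->
  \sum_(lo <= a < hi) (f a : nat) = hi - lo.
Proof.
move=> H; rewrite (@eq_big_nat _ _ _ lo hi _ (fun _ => 1)); last by move=> a /H ->.
by rewrite sum_nat_const_nat muln1.
Qed.

Lemma sum_zeros lo hi (f : nat -> bool) : (forall a, lo <= a < hi -> ~~ f a) ->
  \sum_(lo <= a < hi) (f a : nat) = 0.
Proof.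
move=> H; rewrite (@eq_big_nat _ _ _ lo hi _ (fun _ => 0)); last by move=> a /H /negbTE ->.
by rewrite sum_nat_const_nat muln0.
Qed.

Definition Bc L := \sum_(0 <= a < L) (G a < G L : nat).

Lemma Bc_a L : L < M -> Bc L = L.
Proof.
move=> HL; rewrite /Bc sum_ones ?subn0 // => a Ha.
have [l [Hl1 Hl2 El]] := Glow HL.
have [l' [Hl1' Hl2' El']] := Glow (a := a) ltac:(lia).
have ll : l' <= l.
  case: (leqP l' l) => // h; have := S_mono (j := l) (j' := l'.-1) ltac:(lia); lia.
have := k_mono (a := l') (b := l) ltac:(lia) ll ltac:(lia).
have := k_mono (a := 1) (b := l') ltac:(lia) ltac:(lia) ltac:(lia).
rewrite El El'; lia.
Qed.

Lemma Bc_b : M < k 1 -> Bc M = 0.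
Proof.
move=> HM1; rewrite /Bc sum_zeros // => a _.
have [c [Hc1 Hc2 Hc3 Ec]] := Ghigh (leqnn M).
have c0 : c = 0.
  case: c Hc1 Hc2 Hc3 Ec => // c h1 H _ _; have := H isT.
  have := k_mono (a := 1) (b := c.+1) ltac:(lia) ltac:(lia) h1; lia.
by rewrite Ec c0 S0 subnn.
Qed.

Lemma Ghigh0 a : M <= a -> a < k 1 -> G a = a - M.
Proof.
move=> h1 h2; have [c [Hc1 Hc2 Hc3 Ec]] := Ghigh h1.
case: c Hc1 Hc2 Hc3 Ec => [|c] h3 H _ E; first by rewrite E S0 addn0.
have := H isT; have := k_mono (a := 1) (b := c.+1) ltac:(lia) ltac:(lia) h3; lia.
Qed.

Lemma Bc_c L : M < L -> L < k 1 -> Bc L = L - M.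
Proof.
move=> h1 h2; rewrite /Bc (big_cat_nat _ (n := M)) //=; last by lia.
rewrite sum_zeros ?sum_ones ?add0n // => a Ha.
  have GL := Ghigh0 (ltnW h1) h2; rewrite GL.
  by rewrite Ghigh0 //; lia.
have [l [Hl1 Hl2 El]] := Glow (a := a) ltac:(lia).
have := k_mono (a := 1) (b := l) ltac:(lia) ltac:(lia) ltac:(lia).
rewrite El Ghigh0; lia.
Qed.

Lemma Bc_d L r : 1 <= r <= m.-1 -> k r <= L < k r.+1 -> Bc L = L - M + Ssum r.
Proof.
move=> Hr HL.
have kr1 : k 1 <= k r by apply: k_mono; lia.
have krr : k r < k r.+1 by apply: Hinc; lia.
have SrM : Ssum r <= M by apply: S_mono; lia.
have GL : G L = L - M + Ssum r.
  have [c [Hc1 Hc2 Hc3 Ec]] := Ghigh (a := L) ltac:(lia).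
  have cr : c = r.
    case: (ltngtP c r) => // h.
      have := Hc3 ltac:(lia); have := k_mono (a := c.+1) (b := r) ltac:(lia) h ltac:(lia); lia.
    have := Hc2 ltac:(lia); have := k_mono (a := r.+1) (b := c) ltac:(lia) h ltac:(lia); lia.
  by rewrite Ec cr.
rewrite /Bc (big_cat_nat _ (n := Ssum r)) //=; last by lia.
rewrite (big_cat_nat _ (m := Ssum r) (n := M)) //=; last by lia.
rewrite sum_ones; last first.
  move=> a Ha; have [l [Hl1 Hl2 El]] := Glow (a := a) ltac:(lia).
  have lr : l <= r.
    case: (leqP l r) => // h; have := S_mono (j := r) (j' := l.-1) ltac:(lia); lia.
  have := k_mono (a := l) (b := r) ltac:(lia) lr ltac:(lia).
  have := k_mono (a := 1) (b := l) ltac:(lia) ltac:(lia) ltac:(lia).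
  rewrite El GL; lia.
rewrite sum_zeros; last first.
  move=> a Ha; have [l [Hl1 Hl2 El]] := Glow (a := a) ltac:(lia).
  have lr : r < l.
    case: (ltnP r l) => // h; have := S_mono (j := l) (j' := r) h; lia.
  have := k_mono (a := r.+1) (b := l) ltac:(lia) lr ltac:(lia).
  rewrite El GL; lia.
rewrite sum_ones; last first.
  move=> a Ha; have [c [Hc1 Hc2 Hc3 Ec]] := Ghigh (a := a) ltac:(lia).
  have cr : c <= r.
    case: (leqP c r) => // h.
    have := Hc2 ltac:(lia); have := k_mono (a := r.+1) (b := c) ltac:(lia) h ltac:(lia); lia.
  have := S_mono (j := c) (j' := r) cr.
  rewrite Ec GL; lia.
lia.
Qed.

Lemma Bc_e L : k m <= L -> Bc L = L.
Proof.
move=> HL.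
have GL : G L = L.
  have [c [Hc1 Hc2 Hc3 Ec]] := Ghigh (a := L) ltac:(have := k_mono (a := 1) (b := m) ltac:(lia) ltac:(lia) ltac:(lia); lia).
  have cm : c = m.
    case: (ltnP c m) => h; last by lia.
    have := Hc3 h; have := k_mono (a := c.+1) (b := m) ltac:(lia) h ltac:(lia); lia.
  have := k_mono (a := 1) (b := m) ltac:(lia) ltac:(lia) ltac:(lia).
  by rewrite Ec cm; lia.
rewrite /Bc sum_ones ?subn0 // => a Ha; rewrite GL.
case: (ltnP a M) => h.
  have [l [Hl1 Hl2 El]] := Glow h.
  have := k_mono (a := l) (b := m) ltac:(lia) ltac:(lia) ltac:(lia).
  have := k_mono (a := 1) (b := l) ltac:(lia) ltac:(lia) ltac:(lia).
  rewrite El; lia.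
have [c [Hc1 Hc2 Hc3 Ec]] := Ghigh h.
have := S_mono (j := c) (j' := m) Hc1.
rewrite Ec; lia.
Qed.
End Form.


Lemma wordval_cat (G : finType) (gT : finGroupType) (gen : G -> gT) u v :
  wordval gen (u ++ v) = (wordval gen u * wordval gen v)%g.
Proof. by elim: u => [|g u IH] /=; rewrite ?mul1g // IH mulgA. Qed.

Lemma letS_some n x : 0 < x < n -> exists j : 'I_n.-1, letS n x = Some j /\ nat_of_ord j = x.-1.
Proof.
move=> Hx; have h : x.-1 < n.-1 by lia.
exists (Ordinal h); split => //.
rewrite /letS ifT; last by lia.
by rewrite insubT.
Qed.

Lemma valS n (w : seq nat) : all (fun x => 0 < x < n) w ->
  forall a : 'I_n, nat_of_ord (wordval (@sS n) (pmap (letS n) w) a) = foldl swapN a w.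
Proof.
elim: w => [|x w IH] /=; first by move=> _ a; rewrite perm1.
case/andP => Hx Hw a.
have [j [Ej Vj]] := letS_some Hx.
rewrite Ej /= permM IH //.
congr foldl.
have [a0 [b0 [H0 H1 ->]]] := sS_tperm j.
rewrite tpermVal /swapN /= H0 H1 Vj.
idtac.
by case: eqP => _ //; have -> : x.-1.+1 = x by lia.
Qed.

Definition validD n (o : option nat) : bool := if o is Some x then 0 < x < n else true.

Lemma valD n (Hn : 1 < n) (w : seq (option nat)) : all (validD n) w ->
  forall q : 'I_n * bool, let r := wordval (@sD n) (pmap (letD n) w) q in
    (nat_of_ord r.1, r.2) = foldl swapD (nat_of_ord q.1, q.2) w.
Proof.
elim: w => [|o w IH] /=; first by move=> _ q; rewrite perm1.
case/andP => Ho Hw q.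
case: o Ho => [x|] Hx.
  have [j [Ej Vj]] := letS_some Hx.
  rewrite /= Ej /= permM IH //.
  congr foldl.
  have [a0 [b0 [H0 H1 ->]]] := sD_some j.
  rewrite /= tpermVal /swapN /= H0 H1 Vj.
  idtac.
  by rewrite /= in Hx; have -> : x.-1.+1 = x by lia.
rewrite /= permM IH //.
congr foldl.
have [a0 [b0 [H0 H1 ->]]] := sD_none Hn.
rewrite /swapD /=.
case: (q.1 =P a0) => [->|/eqP na]; first by rewrite H0 H1.
rewrite -val_eqE /= H0 in na; rewrite (negbTE na).
case: (q.1 =P b0) => [->|/eqP nb]; first by rewrite H0 H1.
rewrite -val_eqE /= H1 in nb; rewrite (negbTE nb).
by move: na nb; case: q.
Qed.
Lemma cD_pp (u v : nat) : cD (Posz u.+1) (Posz v.+1) = (v < u).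
Proof. rewrite /cD; case: (ltrP (Posz v.+1) (Posz u.+1)) => h1; case: (ltrP (Posz v.+1) (- Posz u.+1)) => h2; case: ltnP => h3 /=; lia. Qed.
Lemma cD_np (u v : nat) : cD (- Posz u.+1) (Posz v.+1) = (v < u).
Proof. by rewrite cDN cD_pp. Qed.
Lemma cD_pn (u v : nat) : cD (Posz u.+1) (- Posz v.+1) = (u < v).+1.
Proof. rewrite /cD; case: (ltrP (- Posz v.+1) (Posz u.+1)) => h1; case: (ltrP (- Posz v.+1) (- Posz u.+1)) => h2; case: ltnP => h3 /=; lia. Qed.
Lemma cD_nn (u v : nat) : cD (- Posz u.+1) (- Posz v.+1) = (u < v).+1.
Proof. by rewrite cDN cD_pn. Qed.

Lemma fD_formula n (X : {perm 'I_n * bool}) (P : {perm 'I_n}) (L : nat) (G : nat -> nat)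
  (HP : forall a : 'I_n, nat_of_ord (P a) = G a)
  (HX : forall a : 'I_n, X (a, false) = (P a, (nat_of_ord a == 0) || (nat_of_ord a == L))) (HL : L < n) :
  fD X = fS P + 2 * \sum_(0 <= a < L) (G a < G L : nat).
Proof.
rewrite /fD /fS /Phi.
have term : forall p : 'I_n * 'I_n, p.1 < p.2 -> cD (xD X p.1) (xD X p.2) =
    cS (P p.1) (P p.2) + 2 * ((nat_of_ord p.2 == L) && (G p.1 < G p.2)).
  move=> [a b] /= hab; rewrite /xD !HX /sv /= /cS !HP.
  have neq : G a != G b.
    rewrite -!HP; apply/eqP => E.
    have : P a = P b by apply: val_inj.
    by move/perm_inj => E2; move: hab; rewrite E2 ltnn.
  have -> : (nat_of_ord b == 0) = false by apply/negbTE; lia.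
  rewrite /=; case: ((nat_of_ord a == 0) || (nat_of_ord a == L)); case: (nat_of_ord b == L);
    rewrite /= ?cD_pp ?cD_np ?cD_pn ?cD_nn; move: neq; case: ltngtP => //= *; lia.
rewrite (eq_bigr _ term) big_split /=; congr addn.
rewrite -big_distrr /=; congr muln.
rewrite -(pair_big_dep xpredT (fun (a b : 'I_n) => a < b)
  (fun (a b : 'I_n) => ((nat_of_ord b == L) && (G a < G b) : nat))) /=.
have bL : L < n := HL.
rewrite (eq_bigr (fun a : 'I_n => ((a < L) && (G a < G L) : nat))); last first.
  move=> a _; case: (ltnP a L) => ha.
    rewrite (bigD1 (Ordinal bL)) //= eqxx /= big1 ?addn0 // => b /andP [_ nb].
    have -> : (nat_of_ord b == L) = false.
      by apply/negbTE; move: nb; apply: contra => /eqP E; apply/eqP; apply: val_inj.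
    by [].
  rewrite big1 // => b hb.
  by have -> : (nat_of_ord b == L) = false by apply/negbTE; lia.
rewrite -(big_mkord xpredT (fun a => ((a < L) && (G a < G L) : nat))).
rewrite (big_cat_nat _ (n := L)) //=; last by lia.
rewrite [X in _ + X]big1_seq ?addn0; last first.
  move=> a /andP [_]; rewrite mem_index_iota => /andP [h _].
  by rewrite ltnNge h.
by apply: eq_big_nat => a /andP [_ ->].
Qed.


Theorem mainTheorem14 (n m : nat) (k i : nat -> nat) (L : nat) :
  2 <= n -> 1 <= m ->
  2 <= k 1 ->
  (forall j, 1 <= j < m -> k j < k j.+1) ->
  k m <= n ->
  (forall j, 1 <= j <= m -> 1 <= i j <= (k j).-1) ->
  \sum_(1 <= j < m.+1) i j <= k 1 ->
  1 <= L <= n.-1 ->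
  let M := \sum_(1 <= j < m.+1) i j in
  let pi' := ogs_word m k i in
  let pi := wL_word L ++ [seq Some x | x <- pi'] in
  [/\ L < M -> lenD n pi = 2 * L + lenS n pi',
      L = M -> M < k 1 -> lenD n pi = lenS n pi',
      M < L -> L < k 1 -> lenD n pi = 2 * (L - M) + lenS n pi',
      (forall r, 1 <= r <= m.-1 -> k r <= L < k r.+1 ->
         lenD n pi = 2 * (L - \sum_(r.+1 <= j < m.+1) i j) + lenS n pi')
    & k m <= L -> lenD n pi = 2 * L + lenS n pi'].
Proof.
move=> Hn Hm Hk1 Hinc Hkm Hi HM HL M pi' pi.
have kle : forall l, 1 <= l <= m -> k l <= n.
  by move=> l Hl; apply: leq_trans Hkm; apply: (k_mono Hk1 Hinc HM); lia.
have ik : forall l, 1 <= l <= m -> i l < k l.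
  move=> l Hl; have := Hi l Hl; have := k_mono Hk1 Hinc HM (a := 1) (b := l); lia.
have valpi' : all (fun x => 0 < x < n) pi'.
  apply/allP => x /flatten_mapP [j]; rewrite mem_iota => Hj.
  move/flattenP => [w]; rewrite mem_nseq => /andP [_ /eqP ->].
  rewrite /t_word mem_iota => Hx.
  have := kle j ltac:(lia); lia.
have valpi : all (validD n) pi.
  rewrite all_cat; apply/andP; split.
    rewrite /wL_word all_cat /= !all_map; apply/andP; split.
      by apply/allP => x; rewrite mem_rev mem_iota /=; lia.
    by apply/allP => x; rewrite mem_iota /=; lia.
  by rewrite all_map; apply: sub_all valpi' => x.
pose P := wordval (@sS n) (pmap (letS n) pi').
pose X := wordval (@sD n) (pmap (letD n) pi).
have HP : forall a : 'I_n, nat_of_ord (P a) = Gm k i m a.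
  by move=> a; rewrite valS // foldl_ogs.
have HX : forall a : 'I_n, X (a, false) = (P a, (nat_of_ord a == 0) || (nat_of_ord a == L)).
  move=> a; have := valD Hn valpi (a, false).
  rewrite /= foldl_cat foldl_wL; last by lia.
  rewrite foldl_mapSome /= -/X => [[E1 E2]].
  rewrite -E2; case: (X (a, false)) E1 => b s /= E1; congr pair.
  apply: val_inj => /=; rewrite E1 -(valS valpi') /=.
  by rewrite -/P.
have ES : lenS n pi' = fS P by rewrite /lenS lenS_fS.
have ED : lenD n pi = fS P + 2 * Bc m k i L.
  by rewrite /lenD lenD_fD // -/X (fD_formula HP HX) //; lia.
rewrite ED ES.
have B_a := Bc_a Hk1 Hinc Hi HM Hm.
have B_b := Bc_b Hk1 Hinc Hi HM Hm.
have B_c := Bc_c Hk1 Hinc Hi HM Hm.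
have B_d := Bc_d Hk1 Hinc Hi HM Hm.
have B_e := Bc_e Hk1 Hinc Hi HM Hm.
split.
- by move=> h; rewrite B_a //; lia.
- by move=> h1 h2; rewrite h1 B_b //; lia.
- by move=> h1 h2; rewrite B_c // /Ssum -/M; lia.
- move=> r Hr HLr; rewrite (B_d L r Hr HLr).
  have Hsplit : M = Ssum i r + \sum_(r.+1 <= j < m.+1) i j.
    by rewrite /M /Ssum (big_cat_nat _ (n := r.+1)) //; lia.
  have := k_mono Hk1 Hinc HM (a := 1) (b := r); rewrite -/M in HM.
  move: Hsplit; rewrite /Ssum -/M; lia.
- by move=> h; rewrite B_e //; lia.
Qed.
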